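(* Let $L(0,n-1)$ be a path with thresholds $t$ as in the context, let $\lambda\ge1$, and let $0\le j<k\le n-1$ be such that $t(j)=t(k)=1$ and $t(j+1)=\cdots=t(k-1)=2$. Let $p:V\to\{0,1,2\}$ be any incentive function that solves the TBI problem on $L(0,n-1)$ with time bound $\lambda$ (i.e. $\mathsf{Influenced}[p,\lambda]=V$). Then $$\sum_{i=j+1}^{k-1}p(i)\ \ge\ \begin{cases} k-j-2 & \text{if $j+1$ is influenced by $j$ and $k-1$ is influenced by $k$},\\ k-j-1 & \text{if exactly one of: $j+1$ is influenced by $j$, $k-1$ is influenced by $k$},\\ k-j & \text{otherwise.}\end{cases}$$
   Context: Influence model: a network is a graph $G=(V,E)$; $N(v)$ is the neighbourhood of $v$ and $d(v)=|N(v)|$. A threshold function $t:V\to\{1,2,\dots\}$ satisfies $1\le t(v)\le d(v)$. An incentive function is $p:V\to\{0,1,2,\dots\}$ with $0\le p(v)\le t(v)$. The influence process starting from $p$: $\mathsf{Influenced}[p,0]=\{v: p(v)=t(v)\}$ and, for $\ell>0$, $\mathsf{Influenced}[p,\ell]=\mathsf{Influenced}[p,\ell-1]\cup\{v: |N(v)\cap \mathsf{Influenced}[p,\ell-1]|\ge t(v)-p(v)\}$. A node $v$ is influenced at round $\ell$ if it belongs to $\mathsf{Influenced}[p,\ell]$ but not to $\mathsf{Influenced}[p,\ell-1]$ (round $0$: belongs to $\mathsf{Influenced}[p,0]$). The TBI problem with time bound $\lambda$ asks for minimum-cost $p$ with $\mathsf{Influenced}[p,\lambda]=V$. The path $L(0,n-1)$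 has nodes $0,\dots,n-1$ and edges $\{i,i+1\}$, $0\le i\le n-2$; $t(0)=t(n-1)=1$ and $t(i)\in\{1,2\}$ for $1\le i\le n-2$. For neighbours $u,w$, ''$u$ is influenced by $w$'' means that $w$ is influenced at a round strictly earlier than the round at which $u$ is influenced (so $w$ contributes to the influence received by $u$). *)

(* Defs.v *)
From mathcomp Require Import all_boot.
Set Implicit Arguments. Unset Strict Implicit. Unset Printing Implicit Defensive.

(* The path L(0,n-1): nodes 0..n-1, edges {i,i+1}.  Thresholds t and
   incentives p are functions nat -> nat; only their values on 0..n-1 matter. *)

Definition node (n v : nat) : bool := v < n.

Definition deg (n v : nat) : nat := (0 < v) + (v.+1 < n).

Definition nbr_count (n : nat) (S : nat -> bool) (v : nat) : nat :=
  ((0 < v) && S v.-1) + ((v.+1 < n) && S v.+1).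

Fixpoint influenced (n : nat) (t p : nat -> nat) (l : nat) : nat -> bool :=
  match l with
  | 0 => fun v => node n v && (p v == t v)
  | l'.+1 => fun v =>
      influenced n t p l' v ||
      (node n v && (t v - p v <= nbr_count n (influenced n t p l') v))
  end.

Definition influenced_at (n : nat) (t p : nat -> nat) (l v : nat) : Prop :=
  influenced n t p l v /\ (l = 0 \/ ~~ influenced n t p l.-1 v).

Definition influenced_by (n : nat) (t p : nat -> nat) (u w : nat) : Prop :=
  exists lu lw, influenced_at n t p lu u /\ influenced_at n t p lw w /\ lw < lu.

Definition path_threshold (n : nat) (t : nat -> nat) : Prop :=
  t 0 = 1 /\ t n.-1 = 1 /\
  (forall i, 0 < i < n.-1 -> t i = 1 \/ t i = 2) /\
  (forall v, v < n -> 1 <= t v <= deg n v).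

Definition incentive (n : nat) (t p : nat -> nat) : Prop :=
  forall v, v < n -> p v <= t v /\ p v <= 2.

Definition solves_TBI (n : nat) (t p : nat -> nat) (lambda : nat) : Prop :=
  forall v, v < n -> influenced n t p lambda v.

(* Main.v *)
Require Import Defs.
From mathcomp Require Import all_boot.
From mathcomp Require Import zify.

Section Aux.
Variables (n : nat) (t p : nat -> nat) (lam : nat).
Hypothesis Hsol : solves_TBI n t p lam.

Definition rnd (v : nat) := find (fun l => influenced n t p l v) (iota 0 lam.+1).

Lemma infl_mono l d v : influenced n t p l v -> influenced n t p (l + d) v.
Proof. elim: d => [|d IH]; first by rewrite addn0. by rewrite addnS /= => /IH ->. Qed.

Lemma infl_rnd w l : w < n -> influenced n t p l w = (rnd w <= l).
Proof.
move=> wn; have Hl := Hsol w wn.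
have hs : has (fun l => influenced n t p l w) (iota 0 lam.+1).
  by apply/hasP; exists lam; [rewrite mem_iota; lia | exact: Hl].
have rlt : rnd w < lam.+1 by rewrite -[lam.+1](size_iota 0) -has_find.
have Ir : influenced n t p (rnd w) w.
  have := nth_find 0 hs; rewrite nth_iota //.
apply/idP/idP => [Hi|Hr].
  rewrite leqNgt; apply/negP => lr.
  have := before_find 0 lr; rewrite nth_iota ?add0n ?Hi //.
  by apply: (ltn_trans lr).
by rewrite -(subnKC Hr); apply: infl_mono.
Qed.

Lemma at_rnd l w : w < n -> influenced_at n t p l w <-> l = rnd w.
Proof.
move=> wn; rewrite /influenced_at !infl_rnd //; split.
  case=> h1 [h2|h2]; first lia.
  by apply/eqP; rewrite eqn_leq h1 /=; lia.
move=> ->; split => //; case: (rnd w) => [|r]; [by left| right]; rewrite /=; lia.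
Qed.

Lemma by_rnd u w : u < n -> w < n -> influenced_by n t p u w <-> rnd w < rnd u.
Proof.
move=> un wn; split.
  by case=> lu [lw [/at_rnd -> // [/at_rnd -> //]]].
by move=> h; exists (rnd u), (rnd w); rewrite !at_rnd.
Qed.

Lemma key i : 0 < i -> i.+1 < n -> t i = 2 -> p i <= 2 ->
  2 - p i <= (rnd i.-1 < rnd i) + (rnd i.+1 < rnd i).
Proof.
move=> i0 ilt ti pi.
have i_n : i < n by apply: ltnW.
have im_n : i.-1 < n by lia.
case E: (rnd i) => [|l].
  have h0 : influenced n t p 0 i by rewrite infl_rnd // E.
  move: h0 => /= /andP [_ /eqP]; lia.
have h1 : influenced n t p l.+1 i by rewrite infl_rnd // E.
have h2 : influenced n t p l i = false by rewrite infl_rnd // E ltnn.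
move: h1 => /=; rewrite h2 /= => /andP [_].
rewrite /nbr_count i0 ilt /= !infl_rnd // ti.
by rewrite !ltnS.
Qed.
End Aux.

Lemma telesc (f g : nat -> nat) a m : (forall i, f i + g i <= 1) ->
  \sum_(a.+1 <= i < a + m.+2) (f i.-1 + g i) <= f a + m + g (a + m.+1).
Proof.
move=> H; elim: m => [|m IH].
  by rewrite addn2 big_nat1 addn1 addn0.
rewrite [a + m.+3]addnS big_nat_recr /=; last by lia.
have e : (a + m.+2).-1 = a + m.+1 by lia.
rewrite e; have := H (a + m.+1); lia.
Qed.

Theorem lemma1 (n : nat) (t p : nat -> nat) (lambda j k : nat) :
  path_threshold n t ->
  1 <= lambda ->
  j.+1 < k -> k <= n.-1 ->
  t j = 1 -> t k = 1 -> (forall i, j < i < k -> t i = 2) ->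
  incentive n t p ->
  solves_TBI n t p lambda ->
  let A := influenced_by n t p j.+1 j in
  let B := influenced_by n t p k.-1 k in
  (A /\ B -> k - j - 2 <= \sum_(j.+1 <= i < k) p i) /\
  ((A /\ ~ B) \/ (~ A /\ B) -> k - j - 1 <= \sum_(j.+1 <= i < k) p i) /\
  (~ A /\ ~ B -> k - j <= \sum_(j.+1 <= i < k) p i).
Proof.
move=> _ _ jk kn tj tk tI inc sol A B.
have kn' : k < n by lia.
have jn : j < n by lia.
have k1n : k.-1 < n by lia.
have j1n : j.+1 < n by lia.
have HA : A <-> rnd n t p lambda j < rnd n t p lambda j.+1 by apply: by_rnd.
have HB : B <-> rnd n t p lambda k < rnd n t p lambda k.-1 by apply: by_rnd.
set r := rnd n t p lambda in HA HB.
set f := fun i => (r i < r i.+1 : nat).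
set g := fun i => (r i.+1 < r i : nat).
have fg : forall i, f i + g i <= 1.
  move=> i; rewrite /f /g; case: ltngtP => //.
have S1 : \sum_(j.+1 <= i < k) (2 - p i) <= \sum_(j.+1 <= i < k) (f i.-1 + g i).
  rewrite big_nat [X in _ <= X]big_nat; apply: leq_sum => i /andP [h1 h2].
  have ip : i.-1.+1 = i by lia.
  rewrite /f /g ip; apply: key => //; try lia.
    by apply: tI; lia.
  by have := inc i (ltn_trans h2 kn'); case.
have S2 := @telesc f g j (k - j - 2) fg.
have ek : j + (k - j - 2).+2 = k by lia.
have ek1 : j + (k - j - 2).+1 = k.-1 by lia.
rewrite ek ek1 in S2.
have S3 : \sum_(j.+1 <= i < k) p i + \sum_(j.+1 <= i < k) (2 - p i) = (k - j.+1) * 2.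
  rewrite -big_split /= big_nat (eq_bigr (fun _ => 2)).
    by rewrite -big_nat sum_nat_const_nat.
  move=> i /andP [h1 h2]; have := inc i (ltn_trans h2 kn'); case => _; lia.
have gk : g k.-1 = (r k < r k.-1 : nat) by rewrite /g; have -> : k.-1.+1 = k by lia.
have cA : (A /\ f j = 1) \/ (~ A /\ f j = 0).
  rewrite /f; case E: (r j < r j.+1); [left|right]; split => //.
    by apply/HA; rewrite E.
  by move/HA; rewrite E.
have cB : (B /\ g k.-1 = 1) \/ (~ B /\ g k.-1 = 0).
  rewrite gk; case E: (r k < r k.-1); [left|right]; split => //.
    by apply/HB; rewrite E.
  by move/HB; rewrite E.
case: cA => [[a fa]|[a fa]]; case: cB => [[b gb]|[b gb]]; rewrite fa gb in S2;
  (split; [|split]); move=> H; try (by exfalso; tauto); lia.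
Qed.
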